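(* Let $(G,c)$ be an edge-colored DAG in which all edges have the same color, and suppose $G$ has at least two edges. If $(H,c')$ is any edge-colored DAG on the same vertex set in which all edges have the same color and $\mathcal M(H,c')=\mathcal M(G,c)$, then $H=G$.
   Context: An edge-colored DAG $(G,c)$, $G=(V,E)$, has a coloring of $V\sqcup E$ in which every vertex forms its own color class (edge colors distinct from vertex colors). $\mathcal M(G,c)$ is the set of $(I-\Lambda)^{-T}\Omega(I-\Lambda)^{-1}$ with $\Omega=\mathrm{diag}(\omega_i)$, $\omega_i>0$ arbitrary, $\lambda_{ij}=0$ for $ij\notin E$, and $\lambda_{ij}=\lambda_{kl}$ whenever $c(ij)=c(kl)$; with a single edge color this means all $\lambda_{ij}$, $ij\in E$, equal a common real number. *)

(* Defs.v *)
From mathcomp Require Import all_boot all_order all_algebra.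
From mathcomp Require Import reals.
Set Implicit Arguments. Unset Strict Implicit. Unset Printing Implicit Defensive.
Import GRing.Theory Num.Theory.
Local Open Scope ring_scope.

(* A directed graph on vertex set 'I_n is given by its edge set E; the pair
   (i, j) \in E denotes the edge i -> j. *)
Definition edge_rel (n : nat) (E : {set 'I_n * 'I_n}) : rel 'I_n :=
  fun i j => (i, j) \in E.

Definition is_dag (n : nat) (E : {set 'I_n * 'I_n}) : Prop :=
  forall i j : 'I_n, (i, j) \in E -> ~~ connect (edge_rel E) j i.

Definition Lambda_one (R : realType) (n : nat) (E : {set 'I_n * 'I_n}) (lam : R)
  : 'M[R]_n := \matrix_(i, j) (if (i, j) \in E then lam else 0).

Definition cov_of (R : realType) (n : nat) (L : 'M[R]_n) (w : 'rV[R]_n)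
  : 'M[R]_n :=
  (invmx (1%:M - L))^T *m diag_mx w *m invmx (1%:M - L).

(* The model M(G,c) of a DAG with a single edge color (and each vertex its own
   color): all edges share a common real lambda, omega_i > 0 arbitrary. *)
Definition model_one_color (R : realType) (n : nat) (E : {set 'I_n * 'I_n})
  (S : 'M[R]_n) : Prop :=
  exists (w : 'rV[R]_n) (lam : R),
    (forall i, 0 < w 0 i) /\ S = cov_of (Lambda_one E lam) w.

(* Main.v *)
Require Import Defs.
From mathcomp Require Import all_boot all_order all_algebra.
From mathcomp Require Import reals.
From mathcomp Require Import ring lra.
Set Implicit Arguments. Unset Strict Implicit. Unset Printing Implicit Defensive.
Import Order.TTheory GRing.Theory Num.Theory.
Local Open Scope ring_scope.

Definition rk n (E : {set 'I_n * 'I_n}) (x : 'I_n) : nat :=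
  #|[set y | connect (edge_rel E) x y]|.

Lemma rk_edge n (E : {set 'I_n * 'I_n}) x y :
  is_dag E -> (x, y) \in E -> (rk E y < rk E x)%N.
Proof.
move=> dag xy; rewrite /rk; apply: proper_card; apply/properP; split.
  apply/subsetP => z; rewrite !inE => yz.
  by apply: connect_trans yz; apply: connect1.
exists x; first by rewrite inE connect0.
by rewrite inE; apply: dag.
Qed.

Lemma rk_gt0 n (E : {set 'I_n * 'I_n}) x : (0 < rk E x)%N.
Proof. by apply/card_gt0P; exists x; rewrite inE connect0. Qed.

Lemma rk_le n (E : {set 'I_n * 'I_n}) x : (rk E x <= n)%N.
Proof. by have := max_card (mem [set y | connect (edge_rel E) x y]); rewrite card_ord. Qed.

Lemma dag_unit (R : realType) n (E : {set 'I_n * 'I_n}) (lam : R) :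
  is_dag E -> (1%:M - Lambda_one E lam) \in unitmx.
Proof.
move=> dag; rewrite unitmxE unitfE; apply/negP => /det0P [v nz0 vA].
have key : forall m y, (n < rk E y + m)%N -> v 0 y = 0.
  elim=> [|m IH] y.
    by rewrite addn0 ltnNge rk_le.
  move=> hy.
  have : (v *m (1%:M - Lambda_one E lam)) 0 y = 0 by rewrite vA mxE.
  rewrite mulmxBr mulmx1 !mxE => /eqP; rewrite subr_eq0 => /eqP ->.
  apply: big1 => x _; rewrite !mxE; case: ifP => xy; last by rewrite mulr0.
  rewrite IH ?mul0r //.
  have := rk_edge dag xy; move: hy; rewrite addnS ltnS => h1 h2.
  by apply: leq_ltn_trans h1 _; rewrite ltn_add2r.
apply/negP: nz0; rewrite negbK; apply/eqP/matrixP => i y.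
rewrite (ord1 i) mxE; apply: (key n); by rewrite -{1}(addn0 n) addnC ltn_add2r rk_gt0.
Qed.


Definition ae (R : realType) n (E : {set 'I_n * 'I_n}) (i j : 'I_n) : R :=
  if (i, j) \in E then 1 else 0.
Arguments ae {R n}.

Definition Zmx (R : realType) n (P : 'M[R]_n) (w : 'rV[R]_n) : 'M[R]_n :=
  P *m diag_mx (\row_k (w 0 k)^-1) *m P^T.

Lemma covK (R : realType) n (P : 'M[R]_n) (w : 'rV[R]_n) :
  P \in unitmx -> (forall i, w 0 i != 0) ->
  (invmx P)^T *m diag_mx w *m invmx P *m Zmx P w = 1%:M.
Proof.
move=> Pu wn; rewrite /Zmx.
have DD : diag_mx w *m diag_mx (\row_k (w 0 k)^-1) = 1%:M.
  apply/matrixP => i j; rewrite mul_diag_mx !mxE.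
  case: eqP => [->|_]; last by rewrite mulr0.
  by rewrite /= !mulr1n divff.
rewrite !mulmxA -(mulmxA _ (invmx P)) mulVmx // mulmx1 -(mulmxA _ (diag_mx w)) DD mulmx1.
by rewrite -trmx_mul mulmxV // trmx1.
Qed.

Lemma Zeq (R : realType) n (P Q : 'M[R]_n) (w w' : 'rV[R]_n) :
  P \in unitmx -> (forall i, w 0 i != 0) ->
  Q \in unitmx -> (forall i, w' 0 i != 0) ->
  (invmx P)^T *m diag_mx w *m invmx P = (invmx Q)^T *m diag_mx w' *m invmx Q ->
  Zmx P w = Zmx Q w'.
Proof.
move=> Pu wn Qu wn' SS.
have h1 := covK Pu wn; have h2 := covK Qu wn'.
rewrite SS in h1; have h3 := mulmx1C h2.
by rewrite -[Zmx P w]mul1mx -h3 -(mulmxA (Zmx Q w')) h1 mulmx1.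
Qed.

Lemma sum_delta (R : realType) n (F : 'I_n -> R) i :
  \sum_k (i == k)%:R * F k = F i.
Proof.
rewrite (bigD1 i) //= eqxx mul1r big1 ?addr0 // => k; rewrite eq_sym => /negbTE ->.
by rewrite mul0r.
Qed.

Lemma Zentry (R : realType) n (E : {set 'I_n * 'I_n}) (lam : R) (w : 'rV[R]_n) i j :
  Zmx (1%:M - Lambda_one E lam) w i j =
  (i == j)%:R * (w 0 i)^-1
  - lam * (ae E i j * (w 0 j)^-1 + ae E j i * (w 0 i)^-1)
  + lam ^+ 2 * \sum_k ae E i k * ae E j k * (w 0 k)^-1.
Proof.
rewrite /Zmx mxE.
have -> : \sum_k ((1%:M - Lambda_one E lam) *m diag_mx (\row_k0 (w 0 k0)^-1)) i k *
            ((1%:M - Lambda_one E lam)^T k j) =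
   \sum_k ((i == k)%:R * ((j == k)%:R * (w 0 k)^-1)
       - lam * ((i == k)%:R * (ae E j k * (w 0 k)^-1))
       - lam * ((j == k)%:R * (ae E i k * (w 0 k)^-1))
       + lam ^+ 2 * (ae E i k * ae E j k * (w 0 k)^-1)).
  apply: eq_bigr => k _; rewrite mul_mx_diag !mxE /ae.
  rewrite [j == k]eq_sym.
  by case: (i == k); case: (k == j); case: ((i,k) \in E); case: ((j,k) \in E); rewrite /=; ring.
rewrite big_split /= big_split /= big_split /=.
rewrite !sumrN -!mulr_sumr !sum_delta.
rewrite [j == i]eq_sym.
case: (i =P j) => [->|_] /=; ring.
Qed.


Lemma nprod (R : realType) (x y a b : R) : `|x| <= a -> `|y| <= b -> `|x * y| <= a * b.
Proof.
move=> hx hy; rewrite normrM; apply: ler_pM => //.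
Qed.

Lemma ntri3 (R : realType) (x y z a b c : R) :
  `|x| <= a -> `|y| <= b -> `|z| <= c -> `|x + y + z| <= a + b + c.
Proof.
move=> hx hy hz; apply: le_trans (ler_normD _ _) _; apply: lerD => //.
by apply: le_trans (ler_normD _ _) _; apply: lerD.
Qed.

Lemma real_core (R : realType) (t mu ui' h h' ul e1 e2 : R) :
  0 < t -> t <= 1 -> `|mu| <= 7 * t -> `|ui' - 1| <= 199 / 20000 * t ->
  `|h' - h| <= 398 / 20000 * t -> `|h| <= 6 ->
  `|e1| <= 199 / 20000 * t -> `|e2| <= 199 / 20000 * t ->
  2 * t = mu * ui' + e1 -> t * ul = mu * h' + e2 -> 1 <= `|ul - 2 * h| -> False.
Proof.
move=> t0 t1 hmu hui hh hh6 he1 he2 eq1 eq2 hul.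
have hmu7 : `|mu| <= 7 by apply: le_trans hmu _; rewrite -{2}(mulr1 7) ler_pM2l.
have m1 := nprod hmu7 hui.
have m2 : `|mu - 2 * t| <= 1592 / 20000 * t.
  have -> : mu - 2 * t = - e1 + (- (mu * (ui' - 1))) + 0.
    rewrite addr0; apply/eqP; rewrite -subr_eq0; apply/eqP.
    have -> : mu - 2 * t - (- e1 + - (mu * (ui' - 1))) = mu * ui' + e1 - 2 * t by ring.
    by rewrite -eq1 subrr.
  apply: le_trans (ntri3 _ _ _) _.
  - by rewrite normrN; exact: he1.
  - by rewrite normrN; exact: m1.
  - by rewrite normr0; exact: lexx.
  have -> : 199 / 20000 * t + 7 * (199 / 20000 * t) + 0 = 1592 / 20000 * t by ring.
  done.
have m3 := nprod hmu7 hh.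
have m4 := nprod m2 hh6.
have m5 : `|t * (ul - 2 * h)| <= 12537 / 20000 * t.
  have -> : t * (ul - 2 * h) = e2 + mu * (h' - h) + (mu - 2 * t) * h.
    have -> : t * (ul - 2 * h) = t * ul - 2 * t * h by ring.
    rewrite eq2; ring.
  apply: le_trans (ntri3 he2 m3 m4) _.
  have -> : 199 / 20000 * t + 7 * (398 / 20000 * t) + 1592 / 20000 * t * 6
    = 12537 / 20000 * t by ring.
  done.
rewrite normrM gtr0_norm // in m5.
have : t * 1 <= t * `|ul - 2 * h| by rewrite ler_pM2l.
move=> m6; have h7 := le_trans m6 m5; rewrite mulr1 in h7.
move: t0 h7; clear; move=> t0 h7; lra.
Qed.


Definition sig (R : realType) n (E : {set 'I_n * 'I_n}) (d : 'I_n -> R) x y :=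
  \sum_k ae E x k * ae E y k * d k.
Definition Zf (R : realType) n (E : {set 'I_n * 'I_n}) (d : 'I_n -> R) (lam : R) x y :=
  (x == y)%:R * d x - lam * (ae E x y * d y + ae E y x * d x) + lam ^+ 2 * sig E d x y.

Lemma sum_bnd (R : realType) n (F : 'I_n -> R) B :
  (forall k, 0 <= F k <= B) -> 0 <= \sum_k F k /\ \sum_k F k <= n%:R * B.
Proof.
move=> hF; split.
  by apply: sumr_ge0 => k _; case/andP: (hF k).
have -> : n%:R * B = \sum_(k < n) B by rewrite sumr_const card_ord mulr_natl.
by apply: ler_sum => k _; case/andP: (hF k).
Qed.

Lemma sig_bnd (R : realType) n (E : {set 'I_n * 'I_n}) (d : 'I_n -> R) B x y :
  (forall k, 0 <= d k <= B) -> 0 <= sig E d x y /\ sig E d x y <= n%:R * B.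
Proof.
move=> hd; apply: sum_bnd => k; have /andP[h1 h2] := hd k.
have B0 : 0 <= B by apply: le_trans h2.
by rewrite /ae; case: ifP; case: ifP => _ _; rewrite ?mul1r ?mul0r ?lexx ?B0 ?h1 ?h2.
Qed.

Lemma sig_zero (R : realType) n (E : {set 'I_n * 'I_n}) (d : 'I_n -> R) x y :
  (forall c, (y, c) \notin E) -> sig E d x y = 0.
Proof.
move=> hy; apply: big1 => k _; by rewrite /ae (negbTE (hy k)) mulr0 mul0r.
Qed.

Lemma errb (R : realType) (t mu s s' N : R) :
  0 <= t -> `|mu| <= 7 * t -> 0 <= s -> s <= N * 3 -> 0 <= s' -> s' <= N * 4 ->
  N * t = 1 / 20000 ->
  `|t ^+ 2 * s - mu ^+ 2 * s'| <= 199 / 20000 * t.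
Proof.
move=> t0 hmu s0 s3 s'0 s'4 hN.
have a1 : t ^+ 2 * s <= 3 / 20000 * t.
  apply: le_trans (ler_wpM2l (sqr_ge0 t) s3) _.
  have -> : t ^+ 2 * (N * 3) = 3 * (N * t) * t by ring.
  by rewrite hN; lra.
have m2 : mu ^+ 2 <= 49 * t ^+ 2.
  rewrite -real_normK ?num_real //.
  have : `|mu| * `|mu| <= (7 * t) * (7 * t) by apply: ler_pM.
  by rewrite expr2; move=> h; apply: le_trans h _; rewrite le_eqVlt; apply/orP; left; apply/eqP; ring.
have a2 : mu ^+ 2 * s' <= 196 / 20000 * t.
  apply: le_trans (ler_wpM2r s'0 m2) _.
  apply: le_trans (ler_wpM2l _ s'4) _; first by apply: mulr_ge0 => //; apply: sqr_ge0.
  have -> : 49 * t ^+ 2 * (N * 4) = 196 * (N * t) * t by ring.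
  by rewrite hN; lra.
have b1 : 0 <= t ^+ 2 * s by apply: mulr_ge0 => //; apply: sqr_ge0.
have b2 : 0 <= mu ^+ 2 * s' by apply: mulr_ge0 => //; apply: sqr_ge0.
apply: le_trans (ler_normB _ _) _.
rewrite (ger0_norm b1) (ger0_norm b2).
lra.
Qed.


Lemma dag_loop n (E : {set 'I_n * 'I_n}) x : is_dag E -> (x, x) \notin E.
Proof. by move=> dag; apply/negP => h; have := dag _ _ h; rewrite connect0. Qed.

Lemma dag_anti n (E : {set 'I_n * 'I_n}) x y : is_dag E -> (x, y) \in E -> (y, x) \notin E.
Proof.
move=> dag h; apply/negP => h'; have := dag _ _ h.
by rewrite (connect1 (e := edge_rel E) h').
Qed.

Lemma dag_sink n (E : {set 'I_n * 'I_n}) e0 : is_dag E -> e0 \in E ->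
  exists p b, (p, b) \in E /\ forall c, (b, c) \notin E.
Proof.
move=> dag he0.
case: (arg_minnP (fun e : 'I_n * 'I_n => rk E e.2) he0) => [[p b] pb hmin].
exists p, b; split => // c; apply/negP => bc.
have := hmin _ bc; have := rk_edge dag bc; rewrite /= => h1 h2.
by have := leq_trans h1 h2; rewrite ltnn.
Qed.

Lemma aeE (R : realType) n (E : {set 'I_n * 'I_n}) x y :
  ae E x y = (if (x, y) \in E then 1 else 0 :> R).
Proof. by []. Qed.

Lemma sig_ge0 (R : realType) n (E : {set 'I_n * 'I_n}) (d : 'I_n -> R) x y :
  (forall k, 0 <= d k) -> 0 <= sig E d x y.
Proof.
move=> hd; apply: sumr_ge0 => z _; rewrite !aeE; case: ifP; case: ifP => _ _;
  by rewrite ?mul1r ?mul0r ?lexx.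
Qed.

Lemma Zf_diag (R : realType) n (E : {set 'I_n * 'I_n}) (d : 'I_n -> R) lam x :
  (x, x) \notin E -> Zf E d lam x x = d x + lam ^+ 2 * sig E d x x.
Proof. by move=> h; rewrite /Zf eqxx aeE (negbTE h) mul1r !mul0r addr0 mulr0 subr0. Qed.

Lemma Zf_off (R : realType) n (E : {set 'I_n * 'I_n}) (d : 'I_n -> R) lam x y :
  x != y -> Zf E d lam x y = - (lam * (ae E x y * d y + ae E y x * d x)) + lam ^+ 2 * sig E d x y.
Proof. by move=> h; rewrite /Zf (negbTE h) mul0r sub0r. Qed.

Lemma sel_bnd (R : realType) (c1 c2 : bool) (x y : R) :
  0 <= x <= 3 -> 0 <= y <= 3 ->
  0 <= (if c1 then 1 else 0) * x + (if c2 then 1 else 0) * y <= 6.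
Proof.
move=> /andP[a1 a2] /andP[a3 a4].
by case: c1; case: c2; rewrite ?mul1r ?mul0r ?add0r ?addr0; apply/andP; split; lra.
Qed.

Lemma fin1 (R : realType) (t A B : R) :
  0 < t -> - (t * (1 * 2)) + A = 0 + B -> 0 <= B -> A <= 3 / 20000 * t -> False.
Proof. move=> *; lra. Qed.

Lemma fin2 (R : realType) (t x x' A D : R) :
  x + A = x' + D -> A <= 3 / 20000 * t -> x <= 3 -> 0 <= D -> t <= 1 / 20000 -> x' <= 4.
Proof. move=> *; lra. Qed.

Lemma fin3 (R : realType) (x x' A D : R) : x + A = x' + D -> x' - x = A - D.
Proof. move=> h; lra. Qed.

Lemma fin_eq1 (R : realType) (t mu w v z A B : R) :
  - (t * (1 * 2 + 0)) + A = false%:R * w - mu * (0 * v + 1 * z) + B -> 2 * t = mu * z + (A - B).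
Proof. rewrite mul0r; move=> h; lra. Qed.

Lemma fin_eq2 (R : realType) (t mu z x A B : R) :
  - (t * x) + A = - (mu * z) + B -> t * x = mu * z + (A - B).
Proof. move=> h; lra. Qed.

Lemma sel_diff (R : realType) (c1 c2 : bool) (x x' y y' d : R) :
  `|x' - x| <= d -> `|y' - y| <= d ->
  `|(if c1 then 1 else 0) * x' + (if c2 then 1 else 0) * y' -
    ((if c1 then 1 else 0) * x + (if c2 then 1 else 0) * y)| <= 2 * d.
Proof.
move=> hx hy; have d0 : 0 <= d by apply: le_trans hx.
case: c1; case: c2; rewrite ?mul1r ?mul0r ?add0r ?addr0 ?subr0.
- have -> : x' + y' - (x + y) = (x' - x) + (y' - y) by ring.
  by apply: le_trans (ler_normD _ _) _; rewrite mulr2n mulrDl mul1r lerD.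
- by apply: le_trans hx _; rewrite ler_peMl //; lra.
- by apply: le_trans hy _; rewrite ler_peMl //; lra.
-
  by rewrite oppr0 normr0; apply: mulr_ge0.
Qed.

Lemma sel_hul (R : realType) (c1 c2 : bool) (x y : R) :
  1 <= x <= 3 -> 1 <= y <= 3 -> 1 <= `|x - 2 * y| ->
  1 <= `|x - 2 * ((if c1 then 1 else 0) * x + (if c2 then 1 else 0) * y)|.
Proof.
move=> /andP[a1 a2] /andP[a3 a4] h.
case: c1; case: c2; rewrite ?mul1r ?mul0r ?add0r ?addr0 ?mulr0 ?subr0 //;
  rewrite ler_normr; apply/orP; first [by left; lra | by right; lra].
Qed.

Lemma graph_core (R : realType) n (G H : {set 'I_n * 'I_n}) (u u' : 'I_n -> R)
  (t mu : R) i j k l :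
  is_dag G -> is_dag H -> 0 < t -> n%:R * t = 1 / 20000 ->
  (forall x, 1 <= u x <= 3) -> u i = 1 -> u j = 2 -> 1 <= `|u l - 2 * u k| ->
  (forall x, 0 < u' x) ->
  (forall x y, Zf G u t x y = Zf H u' mu x y) ->
  (i, j) \in G -> (k, l) \in G ->
  (i, j) \in H.
Proof.
move=> dG dH t0 hN hu hui huj hkl hu' hid hij hkl'.
case: (boolP ((i, j) \in H)) => // nij; exfalso.
have N1 : 1 <= n%:R :> R.
  by rewrite ler1n; apply: leq_ltn_trans (leq0n i) (ltn_ord i).
have t1 : t <= 1 / 20000.
  rewrite -hN; rewrite -{1}(mul1r t) ler_wpM2r //; exact: ltW.
have nji : (j, i) \notin G := dag_anti dG hij.
have ineqj : i != j by apply/eqP => e; move: hij; rewrite e (negbTE (dag_loop j dG)).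
have eij := hid i j.
rewrite /Zf (negbTE ineqj) !aeE hij (negbTE nji) (negbTE nij) huj mul0r sub0r in eij.
have hsG : forall x y, 0 <= sig G u x y /\ sig G u x y <= n%:R * 3.
  by move=> x y; apply: sig_bnd => z; have /andP[a b] := hu z; rewrite b andbT; apply: le_trans a.
have tsig : forall x y, 0 <= t ^+ 2 * sig G u x y <= 3 / 20000 * t.
  move=> x y; have [s1 s2] := hsG x y; apply/andP; split.
    by apply: mulr_ge0 => //; exact: sqr_ge0.
  apply: le_trans (ler_wpM2l (sqr_ge0 t) s2) _.
  have -> : t ^+ 2 * (n%:R * 3) = 3 * (n%:R * t) * t by ring.
  by rewrite hN mul1r.
case hji : ((j, i) \in H); last first.
  rewrite hji /= !mul0r !addr0 mulr0 subr0 in eij.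
  have sH' := sig_ge0 H i j (fun z => ltW (hu' z)).
  have sH : 0 <= mu ^+ 2 * sig H u' i j by apply: mulr_ge0 => //; exact: sqr_ge0.
  have /andP[_ a1] := tsig i j.
  exact: (fin1 t0 eij sH a1).
have hji' : (j, i) \in H by rewrite hji.
have [p [b [pb hb]]] := dag_sink dH hji'.
have ebb := hid b b.
rewrite Zf_diag ?(dag_loop b dG) // Zf_diag ?(dag_loop b dH) // (@sig_zero _ _ H u' b b hb) mulr0 addr0 in ebb.
have [sb1 sb2] := hsG b b.
have ub1 : 1 <= u' b.
  rewrite -ebb; have /andP[h _] := hu b; apply: le_trans h _.
  rewrite lerDl; apply: mulr_ge0 => //; exact: sqr_ge0.
have pneb : p != b by apply/eqP => e; move: pb; rewrite e (negbTE (dag_loop b dH)).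
have epb := hid p b.
rewrite Zf_off // Zf_off // (@sig_zero _ _ H u' p b hb) mulr0 addr0 !aeE pb (negbTE (hb p)) mul0r addr0 mul1r in epb.
have hu3 : forall x, 0 <= u x <= 3.
  by move=> x; have /andP[a c] := hu x; rewrite c andbT; apply: le_trans a.
have hX : 0 <= t * ((if (p, b) \in G then 1 else 0) * u b + (if (b, p) \in G then 1 else 0) * u p) <= 6 * t.
  have /andP[c1 c2] := sel_bnd ((p, b) \in G) ((b, p) \in G) (hu3 b) (hu3 p); apply/andP; split; first by apply: mulr_ge0 => //; exact: ltW.
  by rewrite mulrC ler_wpM2r //; exact: ltW.
have hmu : `|mu| <= 7 * t.
  have hm : `|mu * u' b| <= 7 * t.
    rewrite ler_norml; have := tsig p b; move: hX epb t0.
    set X := t * _; set Y := t ^+ 2 * _; move=> + + t0; clear; move=> hX epb hY.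
    by apply/andP; split; lra.
  apply: le_trans hm; rewrite normrM (gtr0_norm (lt_le_trans ltr01 ub1)).
  by rewrite ler_peMr.
have exx : forall x, u x + t ^+ 2 * sig G u x x = u' x + mu ^+ 2 * sig H u' x x.
  move=> x; have := hid x x.
  by rewrite Zf_diag ?(dag_loop x dG) // Zf_diag ?(dag_loop x dH).
have hu4 : forall x, 0 <= u' x <= 4.
  move=> x; apply/andP; split; first exact: ltW.
  have /andP[_ a] := tsig x x; have /andP[_ c] := hu x.
  have d : 0 <= mu ^+ 2 * sig H u' x x.
    by apply: mulr_ge0; [exact: sqr_ge0 | apply: sig_ge0 => z; exact: ltW].
  exact: (fin2 (exx x) a c d t1).
have hsH : forall x y, 0 <= sig H u' x y /\ sig H u' x y <= n%:R * 4.
  by move=> x y; apply: sig_bnd.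
have herr : forall x y, `|t ^+ 2 * sig G u x y - mu ^+ 2 * sig H u' x y| <= 199 / 20000 * t.
  move=> x y; have [s1 s2] := hsG x y; have [s3 s4] := hsH x y.
  exact: (errb (ltW t0) hmu s1 s2 s3 s4 hN).
have hud : forall x, `|u' x - u x| <= 199 / 20000 * t.
  by move=> x; rewrite (fin3 (exx x)); apply: herr.
have knel : k != l by apply/eqP => e; move: hkl'; rewrite e (negbTE (dag_loop l dG)).
have nlk : (l, k) \notin G := dag_anti dG hkl'.
have ekl := hid k l.
rewrite Zf_off // Zf_off // !aeE hkl' (negbTE nlk) mul1r mul0r addr0 in ekl.
rewrite hji in eij.
have eq1 := fin_eq1 eij.
have eq2 := fin_eq2 ekl.
have t1' : t <= 1 by apply: le_trans t1 _; lra.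
have hdiff := sel_diff ((k, l) \in H) ((l, k) \in H) (hud l) (hud k).
have e398 : 2 * (199 / 20000 * t) = 398 / 20000 * t :> R by ring.
rewrite e398 in hdiff.
apply: (real_core t0 t1' hmu _ hdiff _ (herr i j) (herr k l) eq1 eq2).
- by have := hud i; rewrite hui.
- have /andP[c1 c2] := sel_bnd ((k, l) \in H) ((l, k) \in H) (hu3 l) (hu3 k).
  by rewrite ger0_norm.
- exact: sel_hul.
Qed.


Definition uf (R : realType) n (i j x : 'I_n) : R :=
  if x == i then 1 else if x == j then 2 else 3.

Lemma uf_bnd (R : realType) n (i j x : 'I_n) : 1 <= uf R i j x <= 3.
Proof. by rewrite /uf; case: eqP => _; [|case: eqP => _]; apply/andP; split; lra. Qed.

Lemma uf_hul (R : realType) n (i j k l : 'I_n) :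
  (k, l) != (i, j) -> 1 <= `|uf R i j l - 2 * uf R i j k|.
Proof.
move=> neq; rewrite /uf.
case: (l =P i) => [li|nli]; case: (l =P j) => [lj|nlj]; case: (k =P i) => [ki|nki];
  case: (k =P j) => [kj|nkj]; rewrite ler_normr; apply/orP;
  try (first [by left; lra | by right; lra]).
all: by move: neq; rewrite ki lj eqxx.
Qed.

Lemma incl (R : realType) n (G H : {set 'I_n * 'I_n}) :
  is_dag G -> is_dag H -> (2 <= #|G|)%N ->
  (forall S : 'M[R]_n, model_one_color G S -> model_one_color H S) -> G \subset H.
Proof.
move=> dG dH cG hM; apply/subsetP => -[i j] hij.
have : (0 < #|G :\ (i, j)|)%N.
  by move: cG; rewrite (cardsD1 (i, j) G) hij add1n ltnS.
case/card_gt0P => -[k l]; rewrite !inE => /andP[neq hkl].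
have ineqj : i != j by apply/eqP => e; move: hij; rewrite e (negbTE (dag_loop j dG)).
have n0 : (0 < n)%N by apply: leq_ltn_trans (leq0n i) (ltn_ord i).
have nR : n%:R != 0 :> R by rewrite pnatr_eq0 -lt0n.
pose w : 'rV[R]_n := \row_x (uf R i j x)^-1.
have wpos : forall x, 0 < w 0 x.
  by move=> x; rewrite mxE invr_gt0; have /andP[a _] := uf_bnd R i j x; lra.
have wn0 : forall x, w 0 x != 0 by move=> x; rewrite gt_eqF.
pose t : R := (20000 * n%:R)^-1.
have t0 : 0 < t by rewrite invr_gt0 mulr_gt0 // ltr0n.
have hN : n%:R * t = 1 / 20000 by rewrite /t; field; rewrite nR.
have [w' [mu [hw' eqS]]] : model_one_color H (cov_of (Lambda_one G t) w).
  by apply: hM; exists w, t.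
have wn0' : forall x, w' 0 x != 0 by move=> x; rewrite gt_eqF.
have hZ := Zeq (dag_unit t dG) wn0 (dag_unit mu dH) wn0' eqS.
have hid : forall x y, Zf G (fun k => (w 0 k)^-1) t x y = Zf H (fun k => (w' 0 k)^-1) mu x y.
  by move=> x y; move/matrixP: hZ => /(_ x y); rewrite !Zentry.
have huE : forall x, (w 0 x)^-1 = uf R i j x by move=> x; rewrite mxE invrK.
apply: (graph_core dG dH t0 hN _ _ _ _ _ hid hij hkl).
- by move=> x; rewrite huE; apply: uf_bnd.
- by rewrite huE /uf eqxx.
- by rewrite huE /uf eq_sym (negbTE ineqj) eqxx.
- by rewrite !huE; apply: uf_hul.
- by move=> x; rewrite invr_gt0.
Qed.

Theorem theorem5p8 (R : realType) (n : nat) (G H : {set 'I_n * 'I_n}) :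
  is_dag G -> (2 <= #|G|)%N -> is_dag H ->
  (forall S : 'M[R]_n, model_one_color H S <-> model_one_color G S) ->
  H = G.
Proof.
move=> dG cG dH hM.
have GH : G \subset H by apply: (incl dG dH cG) => S /hM.
have cH : (2 <= #|H|)%N by apply: leq_trans cG (subset_leq_card GH).
have HG : H \subset G by apply: (incl dH dG cH) => S /hM.
by apply/eqP; rewrite eqEsubset HG GH.
Qed.
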